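(* Every finitely generated centrally endo-AIP $\mathbb{Z}$-module is torsion-free or semisimple.
   Context: For a module $M$ with $S=\mathrm{End}(M)$ and $N\le M$, $l_S(N)=\{\phi\in S:\phi(N)=0\}$. An ideal $I$ of $S$ is centrally s-unital if for every $a\in I$ there is $z\in I$ central in $S$ with $az=a$. $M$ is centrally endo-AIP if $l_S(N)$ is a centrally s-unital ideal of $S$ for every fully invariant submodule $N$ of $M$. *)

(* Defs.v *)
(* A Z-module is an abelian group, i.e. a zmodType. *)
From mathcomp Require Import all_boot all_order all_algebra.
Set Implicit Arguments. Unset Strict Implicit. Unset Printing Implicit Defensive.
Import GRing.Theory.
Local Open Scope ring_scope.

Section ZMod.
Variable M : zmodType.

(* Endomorphisms of the Z-module M: additive maps M -> M
   (additivity implies Z-linearity). *)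
Definition is_endo (f : M -> M) : Prop := forall x y, f (x + y) = f x + f y.

Definition is_submodule (N : M -> Prop) : Prop :=
  N 0 /\ forall x y, N x -> N y -> N (x - y).

Definition fully_invariant (N : M -> Prop) : Prop :=
  is_submodule N /\ forall f, is_endo f -> forall x, N x -> N (f x).

Definition lann (N : M -> Prop) (f : M -> M) : Prop :=
  is_endo f /\ forall x, N x -> f x = 0.

(* z is central in S = End(M) (equality of endomorphisms is pointwise). *)
Definition central_endo (z : M -> M) : Prop :=
  is_endo z /\ forall g, is_endo g -> forall x, z (g x) = g (z x).

(* An ideal I of S is centrally s-unital: for every a in I there is z in I,
   central in S, with a z = a (product in S = composition). *)
Definition centrally_s_unital (I : (M -> M) -> Prop) : Prop :=
  forall a, I a -> exists z, I z /\ central_endo z /\ (forall x, a (z x) = a x).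

Definition centrally_endo_AIP : Prop :=
  forall N, fully_invariant N -> centrally_s_unital (lann N).

Definition fin_gen : Prop :=
  exists (n : nat) (g : 'I_n -> M),
    forall x, exists c : 'I_n -> int, x = \sum_(i < n) (g i *~ c i).

Definition torsion_free : Prop :=
  forall (x : M) (n : nat), (0 < n)%N -> x *+ n = 0 -> x = 0.

Definition semisimple : Prop :=
  forall N, is_submodule N ->
    exists K, is_submodule K /\ (forall x, N x -> K x -> x = 0) /\
      (forall x, exists a b, N a /\ K b /\ x = a + b).
End ZMod.

(* Main.v *)
Require Import Defs.
From mathcomp Require Import all_boot all_order all_algebra zify.
From Stdlib Require Import Classical ClassicalEpsilon.
Set Implicit Arguments. Unset Strict Implicit. Unset Printing Implicit Defensive.
Import GRing.Theory Num.Theory.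
Local Open Scope ring_scope.

Section Basics.
Variable M : zmodType.

Lemma fchoice (A B : Type) (R : A -> B -> Prop) :
  (forall a, exists b, R a b) -> exists f : A -> B, forall a, R a (f a).
Proof.
move=> H; exists (fun a => proj1_sig (constructive_indefinite_description _ (H a))).
by move=> a; case: (constructive_indefinite_description _ (H a)).
Qed.

Lemma endo0 (f : M -> M) : is_endo f -> f 0 = 0.
Proof. move=> hf; have := hf 0 0; rewrite addr0 => h. by apply: (addrI (f 0)); rewrite -h addr0. Qed.

Lemma endoN (f : M -> M) : is_endo f -> forall x, f (- x) = - f x.
Proof.
move=> hf x; apply/eqP; rewrite -subr_eq0 opprK -hf addNr endo0 //.
Qed.

Lemma endoMn (f : M -> M) : is_endo f -> forall x n, f (x *+ n) = f x *+ n.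
Proof.
move=> hf x; elim=> [|n IH]; first by rewrite !mulr0n endo0.
by rewrite !mulrS hf IH.
Qed.

Lemma endoMz (f : M -> M) : is_endo f -> forall x m, f (x *~ m) = f x *~ m.
Proof.
move=> hf x [n|n]; first by rewrite -!pmulrn endoMn.
by rewrite !NegzE !mulrNz endoN // -!pmulrn endoMn.
Qed.

Lemma sub0 (N : M -> Prop) : is_submodule N -> N 0.
Proof. by case. Qed.
Lemma subN (N : M -> Prop) : is_submodule N -> forall x, N x -> N (- x).
Proof. by case=> h0 hB x hx; rewrite -sub0r; apply: hB. Qed.
Lemma subD (N : M -> Prop) : is_submodule N -> forall x y, N x -> N y -> N (x + y).
Proof. move=> hN x y hx hy; rewrite -(opprK y); apply: hN.2 => //; exact: subN. Qed.
Lemma subB (N : M -> Prop) : is_submodule N -> forall x y, N x -> N y -> N (x - y).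
Proof. by case. Qed.
Lemma subMn (N : M -> Prop) : is_submodule N -> forall x n, N x -> N (x *+ n).
Proof.
move=> hN x n hx; elim: n => [|n IH]; first by rewrite mulr0n; apply: sub0.
by rewrite mulrS; apply: subD.
Qed.
Lemma subMz (N : M -> Prop) : is_submodule N -> forall x m, N x -> N (x *~ m).
Proof.
move=> hN x [n|n] hx; first by rewrite -pmulrn; apply: subMn.
by rewrite NegzE mulrNz -pmulrn; apply: subN => //; apply: subMn.
Qed.
Lemma subSum (N : M -> Prop) n (g : 'I_n -> M) (c : 'I_n -> int) :
  is_submodule N -> (forall i, N (g i)) -> N (\sum_(i < n) g i *~ c i).
Proof.
move=> hN hg; elim/big_ind: _ => //; first exact: sub0.
  by move=> x y; apply: subD.
by move=> i _; apply: subMz.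
Qed.

Definition tors (x : M) := exists n, (0 < n)%N /\ x *+ n = 0.

Lemma tors_sub : is_submodule tors.
Proof.
split; first by exists 1%N.
move=> x y [n [n0 hn]] [m [m0 hm]]; exists (n * m)%N; split; first by rewrite muln_gt0 n0.
by rewrite mulrnBl mulrnA hn mul0rn mulnC mulrnA hm mul0rn subrr.
Qed.

Lemma tors_fi : fully_invariant tors.
Proof.
split; first exact: tors_sub.
by move=> f hf x [n [n0 hn]]; exists n; split => //; rewrite -endoMn // hn endo0.
Qed.

Lemma kill_coprime (t : M) (a b : int) :
  t *~ a = 0 -> t *~ b = 0 -> coprimez a b -> t = 0.
Proof.
move=> ha hb /coprimezP [[u v] /= huv].
by rewrite -(mulr1z t) -huv mulrzDr [u * a]mulrC [v * b]mulrC !mulrzA ha hb !mul0rz addr0.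
Qed.

Lemma exact_order (g : M) : tors g ->
  exists o, (0 < o)%N /\ forall k : int, g *~ k = 0 <-> (o%:Z %| k)%Z.
Proof.
move=> hg.
have ex : exists n, (0 < n)%N && (g *+ n == 0).
  by case: hg => n [n0 hn]; exists n; rewrite n0 hn eqxx.
case: (ex_minnP ex) => o /andP [o0 /eqP ho] omin.
exists o; split => // k; split.
  move=> hk; have := divz_eq k o; set r := (k %% o)%Z => ek.
  have r0 : 0 <= r by apply: modz_ge0; rewrite eqz_nat -lt0n.
  have rlt : r < o%:Z by apply: ltz_pmod; rewrite ltz_nat.
  have hr : g *~ r = 0.
    move: hk; rewrite ek mulrzDr [(_ %/ _)%Z * _]mulrC mulrzA -pmulrn ho mul0rz add0r //.
  have : r = 0.
    clear ek; case: r r0 rlt hr => [n _ rlt hr|n]; last by [].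
    apply/eqP; rewrite eqz_nat; apply/negPn/negP => n0.
    have : (o <= n)%N by apply: omin; rewrite lt0n n0 pmulrn hr eqxx.
    by rewrite leqNgt -ltz_nat rlt.
  move=> r00; apply/dvdzP; exists (k %/ o)%Z; by rewrite {1}ek -/r r00 addr0.
case/dvdzP => q ->; by rewrite mulrC mulrzA -pmulrn ho mul0rz.
Qed.

Lemma not_dvd_div o p : (0 < o)%N -> prime p -> (p %| o)%N -> ~~ (o %| o %/ p)%N.
Proof.
move=> o0 pp po; apply/negP => h.
have q0 : (0 < o %/ p)%N by rewrite divn_gt0 ?prime_gt0 // dvdn_leq.
have := dvdn_leq q0 h; rewrite leqNgt ltn_Pdiv ?prime_gt1 //.
Qed.

End Basics.


Section Generic.
Variable M : zmodType.
Variable n : nat.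
Variable g : 'I_n -> M.
Hypothesis hg : forall x, exists c : 'I_n -> int, x = \sum_(i < n) (g i *~ c i).
Variable H : M -> Prop.
Hypothesis hH : is_submodule H.
Variable q : nat.
Hypothesis hq : q = 0%N \/ prime q.
Hypothesis hqH : forall x, H (x *~ q%:Z).

Definition dq (m : int) := (q%:Z %| m)%Z.

Lemma ndM a b : ~~ dq a -> ~~ dq b -> ~~ dq (a * b).
Proof.
rewrite /dq !dvdzE abszM absz_nat.
case: hq => [->|pq]; first by rewrite !dvd0n muln_eq0 => /negbTE -> /negbTE ->.
by rewrite Euclid_dvdM // => /negbTE -> /negbTE ->.
Qed.

Lemma nd1 : ~~ dq 1.
Proof.
rewrite /dq dvdzE absz_nat /=; case: hq => [-> //|pq].
by rewrite dvdn1; apply/eqP => q1; rewrite q1 in pq.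
Qed.

Lemma rearr (a b c d : M) : (a - b) - (c - d) = (a - c) - (b - d).
Proof. by rewrite !opprB -!addrA; congr (_ + _); rewrite addrCA [in RHS]addrCA [- b + _]addrC. Qed.

Lemma sum_delta k a : \sum_(i < n) g i *~ (if i == k then a else 0) = g k *~ a.
Proof.
rewrite (bigD1 k) //= eqxx big1 ?addr0 // => i /negbTE ->; exact: mulr0z.
Qed.

Definition indep (S : {set 'I_n}) := forall c : 'I_n -> int,
  (forall i, i \notin S -> c i = 0) -> H (\sum_(i < n) g i *~ c i) -> forall i, dq (c i).

Lemma maxS : exists S, indep S /\ forall k, k \notin S -> ~ indep (k |: S).
Proof.
suff: forall m (S : {set 'I_n}), (n - #|S| <= m)%N -> indep S ->
    exists S, indep S /\ forall k, k \notin S -> ~ indep (k |: S).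
  move/(_ n set0); apply => [|c hs _ i]; first by rewrite leq_subr.
  rewrite hs ?in_set0 //; exact: dvdz0.
elim=> [|m IH] S hS iS.
  case: (classic (exists k, k \notin S /\ indep (k |: S))) => [[k [kS _]]|hn].
    have := max_card (mem (k |: S)); rewrite cardsU1 kS card_ord; lia.
  by exists S; split => // k kS ik; apply: hn; exists k.
case: (classic (exists k, k \notin S /\ indep (k |: S))) => [[k [kS ik]]|hn].
  apply: (IH (k |: S)) => //; rewrite cardsU1 kS; lia.
by exists S; split => // k kS ik; apply: hn; exists k.
Qed.

Lemma dep k S : indep S -> k \notin S -> ~ indep (k |: S) ->
  exists m, ~~ dq m /\ exists c : 'I_n -> int, (forall i, i \notin S -> c i = 0) /\
    H (g k *~ m - \sum_(i < n) g i *~ c i).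
Proof.
move=> iS kS hn. move: (not_all_ex_not _ _ hn) => [c hc0]. move: (imply_to_and _ _ hc0) => [hsupp hc2]. move: (imply_to_and _ _ hc2) => [hc hc3]. move: (not_all_ex_not _ _ hc3) => [i hi].
pose c' i := if i == k then 0 else c i.
have hsp : \sum_(i < n) g i *~ c i = g k *~ c k + \sum_(i < n) g i *~ c' i.
  rewrite (bigD1 k) //= [in RHS](bigD1 k) //= /c' eqxx mulr0z add0r; congr (_ + _).
  by apply: eq_bigr => j /negbTE ->.
have supp' : forall i, i \notin S -> c' i = 0.
  move=> j jS; rewrite /c'; case: eqP => // /eqP jk; apply: hsupp.
  by rewrite in_setU1 negb_or jk.
case: (boolP (dq (c k))) => hck.
  exfalso; apply: hi.
  have hk : H (g k *~ c k).
    case/dvdzP: hck => r ->; rewrite mulrzA; exact: hqH.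
  have hc' : H (\sum_(i < n) g i *~ c' i).
    have -> : \sum_(i < n) g i *~ c' i = \sum_(i < n) g i *~ c i - g k *~ c k.
      by rewrite hsp addrC addKr.
    exact: subB.
  have := iS c' supp' hc' i; rewrite /c'; case: eqP => [-> _|] //.
exists (c k); split => //; exists (fun i => - c' i); split.
  by move=> j jS; rewrite supp' ?oppr0.
have -> : \sum_(i < n) g i *~ - c' i = - \sum_(i < n) g i *~ c' i.
  by rewrite -sumrN; apply: eq_bigr => j _; rewrite mulrNz.
by rewrite opprK -hsp.
Qed.

Lemma coords (y : M) (hy : forall m, ~~ dq m -> ~ H (y *~ m)) :
  exists psi : M -> int, (forall x z, dq (psi (x + z) - (psi x + psi z))) /\
    (forall x, H x -> dq (psi x)) /\ exists y', ~~ dq (psi y').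
Proof.
case: maxS => S [iS maxs].
have hall : forall k, exists m, ~~ dq m /\ exists c : 'I_n -> int,
    (forall i, i \notin S -> c i = 0) /\ H (g k *~ m - \sum_(i < n) g i *~ c i).
  move=> k; case: (boolP (k \in S)) => kS; last exact: dep (maxs k kS).
  exists 1; split; first exact: nd1.
  exists (fun i => if i == k then 1 else 0); split.
    by move=> i iS'; case: eqP => // ik; rewrite ik kS in iS'.
  by rewrite sum_delta subrr; apply: sub0.
case: (fchoice hall) => mf hmf.
have : forall k, exists c : 'I_n -> int, (forall i, i \notin S -> c i = 0) /\
    H (g k *~ mf k - \sum_(i < n) g i *~ c i) by move=> k; case: (hmf k).
case/fchoice => ef hef.
pose D := \prod_(k < n) mf k.
have nD : ~~ dq D.
  rewrite /D; elim/big_ind: _ => //; last by move=> k _; case: (hmf k).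
    exact: nd1.
  exact: ndM.
pose P x := exists e : 'I_n -> int, (forall i, i \notin S -> e i = 0) /\
   H (x *~ D - \sum_(i < n) g i *~ e i).
have Psub : is_submodule P.
  split.
    exists (fun _ => 0); split => //.
    rewrite mul0rz big1 => [|i _]; last by rewrite mulr0z.
    rewrite subrr; exact: sub0.
  move=> x z [e1 [s1 h1]] [e2 [s2 h2]]; exists (fun i => e1 i - e2 i); split.
    by move=> i iS'; rewrite s1 ?s2 ?subrr.
  have -> : \sum_(i < n) g i *~ (e1 i - e2 i) = \sum_(i < n) g i *~ e1 i - \sum_(i < n) g i *~ e2 i.
    by rewrite -sumrB; apply: eq_bigr => i _; rewrite mulrzBr.
  by rewrite mulrzBl rearr; apply: subB.
have Pall : forall x, P x.
  move=> x; case: (hg x) => c ->; apply: subSum => // k.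
  case: (hef k) => s1 h1.
  pose Dk := \prod_(j < n | j != k) mf j.
  exists (fun i => ef k i * Dk); split; first by move=> i iS'; rewrite s1 ?mul0r.
  have -> : D = mf k * Dk by rewrite /D (bigD1 k).
  have -> : \sum_(i < n) g i *~ (ef k i * Dk) = (\sum_(i < n) g i *~ ef k i) *~ Dk.
    by rewrite mulrz_suml; apply: eq_bigr => i _; rewrite mulrzA.
  by rewrite mulrzA -mulrzBl; apply: subMz.
case: (fchoice Pall) => e he.
have uniq : forall x e1 e2, (forall i, i \notin S -> e1 i = 0) -> (forall i, i \notin S -> e2 i = 0) ->
    H (x *~ D - \sum_(i < n) g i *~ e1 i) -> H (x *~ D - \sum_(i < n) g i *~ e2 i) ->
    forall i, dq (e1 i - e2 i).
  move=> x e1 e2 s1 s2 h1 h2; apply: iS => [i iS'|]; first by rewrite s1 ?s2 ?subrr.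
  have -> : \sum_(i < n) g i *~ (e1 i - e2 i) = \sum_(i < n) g i *~ e1 i - \sum_(i < n) g i *~ e2 i.
    by rewrite -sumrB; apply: eq_bigr => i _; rewrite mulrzBr.
  have -> : \sum_(i < n) g i *~ e1 i - \sum_(i < n) g i *~ e2 i =
      (x *~ D - \sum_(i < n) g i *~ e2 i) - (x *~ D - \sum_(i < n) g i *~ e1 i).
    by rewrite rearr subrr sub0r opprB.
  exact: subB.
have [i0 i0S] : exists i0, i0 \in S.
  apply: NNPP => hn; apply: (hy D nD).
  case: (he y) => s1 h1; move: h1; rewrite big1 ?subr0 // => i _.
  rewrite s1 ?mulr0z //; apply/negP => iS'; apply: hn; by exists i.
exists (fun x => e x i0); split.
  move=> x z; case: (he x) => sx hx; case: (he z) => sz hz; case: (he (x + z)) => sxz hxz.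
  apply: (uniq (x + z) _ (fun i => e x i + e z i)) => //.
    by move=> i iS'; rewrite sx ?sz ?addr0.
  have -> : \sum_(i < n) g i *~ (e x i + e z i) = \sum_(i < n) g i *~ e x i + \sum_(i < n) g i *~ e z i.
    by rewrite -big_split; apply: eq_bigr => i _; rewrite mulrzDr.
  rewrite mulrzDl opprD addrACA; exact: subD.
split.
  move=> x hx; case: (he x) => sx hxx; rewrite -(subr0 (e x i0)).
  apply: (uniq x _ (fun _ => 0)) => //; rewrite big1 ?subr0; last by move=> i _; rewrite mulr0z.
  exact: subMz.
exists (g i0).
case: (he (g i0)) => s0 h0.
have hd : dq (e (g i0) i0 - (if i0 == i0 then D else 0)).
  apply: (uniq (g i0) _ (fun i => if i == i0 then D else 0)) => //.
    by move=> i iS'; case: eqP => // ii; rewrite ii i0S in iS'.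
  by rewrite sum_delta subrr; apply: sub0.
rewrite eqxx in hd; apply/negP => hd2; move/negP: nD; apply.
have := rpredB hd2 hd; by rewrite opprB addrC subrK.
Qed.

End Generic.


Section Compl.
Variable M : zmodType.

Lemma mulrzn (x : M) (k : int) (n : nat) : (x *~ k) *+ n = (x *+ n) *~ k.
Proof. by rewrite !pmulrn -!mulrzA mulrC. Qed.

Lemma mulrzC (x : M) (a b : int) : x *~ a *~ b = x *~ b *~ a.
Proof. by rewrite -!mulrzA mulrC. Qed.

Lemma kill_dvd (t : M) (a d : int) : t *~ a = 0 -> (a %| d)%Z -> t *~ d = 0.
Proof. by move=> ha /dvdzP [r ->]; rewrite mulrC mulrzA ha mul0rz. Qed.

Lemma sum_sub (N K : M -> Prop) : is_submodule N -> is_submodule K ->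
  is_submodule (fun z => exists a b, N a /\ K b /\ z = a + b).
Proof.
move=> hN hK; split; first by exists 0, 0; split; [exact: sub0|split; [exact: sub0|rewrite addr0]].
move=> x y [a [b [na [kb ->]]]] [a' [b' [na' [kb' ->]]]].
exists (a - a'), (b - b'); split; first exact: subB.
split; first exact: subB.
by rewrite opprD addrACA.
Qed.

Hypothesis B1 : forall p (u : M), prime p -> u *+ (p * p) = 0 -> u *+ p = 0.

Lemma lemC (S : M -> Prop) (hS : is_submodule S) : forall o (g : M), (0 < o)%N ->
  (forall k : int, g *~ k = 0 <-> (o%:Z %| k)%Z) ->
  exists h, (forall m, S (h *~ m) -> h *~ m = 0) /\ exists a m, S a /\ g = a + h *~ m.
Proof.
elim/ltn_ind => o IH g o0 hord.
case: (classic (forall m, S (g *~ m) -> g *~ m = 0)) => [hall|hn].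
  exists g; split => //; exists 0, 1; split; [exact: sub0|by rewrite add0r mulr1z].
move: (not_all_ex_not _ _ hn) => [m hm]; move: (imply_to_and _ _ hm) => [Sm nm].
pose dn := gcdn `|m| o.
have dn_o : (dn %| o)%N by apply: dvdn_gcdr.
have dn_m : (dn%:Z %| m)%Z by rewrite dvdzE absz_nat dvdn_gcdl.
have Sd : S (g *~ dn%:Z).
  case: (Bezoutz m o) => u [v huv].
  have -> : (dn%:Z) = gcdz m o by rewrite /gcdz absz_nat.
  rewrite -huv mulrzDr [u * m]mulrC [v * _]mulrC !mulrzA.
  have -> : g *~ o = 0 by apply/hord; exact: dvdzz.
  rewrite mul0rz addr0; exact: subMz.
have nd : g *~ dn%:Z != 0.
  apply/eqP => /hord hod; apply: nm; apply/hord; exact: dvdz_trans hod dn_m.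
have dn0 : (0 < dn)%N.
  rewrite lt0n; apply/negP => /eqP d0; move: nd; rewrite d0 mulr0z eqxx //.
have dnlt : (dn < o)%N.
  rewrite ltn_neqAle (dvdn_leq o0 dn_o) andbT; apply/eqP => dno; move: nd.
  rewrite dno; have -> : g *~ o = 0 by apply/hord; exact: dvdzz.
  by rewrite eqxx.
pose e := (o %/ dn)%N.
have oe : o = (e * dn)%N by rewrite divnK.
have e0 : (0 < e)%N by move: o0; rewrite oe muln_gt0 => /andP [].
have cop : coprime dn e.
  apply: NNPP => /negP ncop.
  have g1 : (1 < gcdn dn e)%N.
    by rewrite ltn_neqAle eq_sym ncop /= gcdn_gt0 dn0.
  set r := pdiv (gcdn dn e).
  have pr : prime r by apply: pdiv_prime.
  have rd : (r %| dn)%N by apply: dvdn_trans (pdiv_dvd _) (dvdn_gcdl _ _).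
  have re : (r %| e)%N by apply: dvdn_trans (pdiv_dvd _) (dvdn_gcdr _ _).
  have rro : (r * r %| o)%N by rewrite oe; apply: dvdn_mul.
  set k := (o %/ (r * r))%N.
  have ok : o = (k * (r * r))%N by rewrite divnK.
  have : (g *~ k%:Z) *+ (r * r) = 0.
    by rewrite -pmulrn -mulrnA -ok pmulrn; apply/hord; exact: dvdzz.
  move/(B1 pr); rewrite pmulrn -mulrzA -PoszM => /hord.
  rewrite dvdzE !absz_nat => hdiv.
  have : (o %/ r = k * r)%N by rewrite ok mulnA mulnK // prime_gt0.
  move=> hk; rewrite -hk in hdiv.
  have := not_dvd_div o0 pr (dvdn_trans (dvdn_mull _ (dvdnn r)) rro).
  by rewrite hdiv.
pose g1 := g *~ e%:Z.
have hord1 : forall k : int, g1 *~ k = 0 <-> (dn%:Z %| k)%Z.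
  move=> k; rewrite /g1 -mulrzA hord oe PoszM dvdz_mul2l //.
  by rewrite eqz_nat -lt0n.
case: (IH dn dnlt g1 dn0 hord1) => h [hh [a1 [m1 [Sa1 eq1]]]].
have : coprimez dn%:Z e%:Z by rewrite coprimezE !absz_nat.
case/coprimezP => [[u2 v2]] /= huv.
exists h; split => //.
exists ((g *~ dn%:Z) *~ u2 + a1 *~ v2), (m1 * v2); split.
  apply: subD => //; exact: subMz.
rewrite -{1}(mulr1z g) -huv mulrzDr [u2 * _]mulrC [v2 * _]mulrC !mulrzA -/g1 eq1.
by rewrite mulrzDl addrA.
Qed.

Lemma ext (N : M -> Prop) (hN : is_submodule N) n (g : 'I_n -> M)
  (ht : forall i, tors (g i)) :
  forall j, (j <= n)%N -> exists K, is_submodule K /\ (forall x, N x -> K x -> x = 0) /\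
    forall i : 'I_n, (i < j)%N -> exists a b, N a /\ K b /\ g i = a + b.
Proof.
elim=> [|j IH] jn.
  exists (fun z => z = 0); split.
    by split => // x y -> ->; rewrite subrr.
  by split => // i.
case: (IH (ltnW jn)) => K [hK [hNK hcov]].
have hS := sum_sub hN hK.
pose jj := Ordinal jn.
case: (exact_order (ht jj)) => o [o0 hord].
case: (lemC hS o0 hord) => h [hh [a [m [Sa eqg]]]].
exists (fun z => exists k mm, K k /\ z = k + h *~ mm); split.
  split; first by exists 0, 0; split; [exact: sub0|by rewrite mulr0z addr0].
  move=> x y [k [mm [kk ->]]] [k' [mm' [kk' ->]]].
  exists (k - k'), (mm - mm'); split; first exact: subB.
  by rewrite mulrzBr opprD addrACA.
split.
  move=> x nx [k [mm [kk ex]]].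
  have : h *~ mm = 0.
    apply: hh; exists x, (- k); split => //; split; first exact: subN.
    by rewrite ex addrC addKr.
  move=> h0; rewrite h0 addr0 in ex; subst x; exact: hNK.
move=> i; rewrite ltnS leq_eqVlt => /orP [/eqP ij|ij].
  have -> : i = jj by apply: val_inj.
  case: Sa => a' [b' [na' [kb' ea]]].
  exists a', (b' + h *~ m); split => //; split; first by exists b', m.
  by rewrite eqg ea addrA.
case: (hcov i ij) => a' [b' [na' [kb' ea]]].
exists a', b'; split => //; split => //; exists b', 0; by rewrite mulr0z addr0.
Qed.

End Compl.


Section Main.
Variable M : zmodType.

Lemma descent p (pp : prime p) : forall N (psi : M -> int) y,
  (forall x z, psi (x + z) = psi x + psi z) -> (forall x, tors x -> psi x = 0) ->
  psi y != 0 -> (`|psi y| < N)%N ->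
  exists psi' : M -> int, (forall x z, psi' (x + z) = psi' x + psi' z) /\
    (forall x, tors x -> psi' x = 0) /\ exists y', ~~ (p%:Z %| psi' y')%Z.
Proof.
elim=> [//|N IH] psi y hadd htor hy hN.
case: (classic (exists y', ~~ (p%:Z %| psi y')%Z)) => [ex|nex].
  by exists psi.
have alld : forall x, (p%:Z %| psi x)%Z.
  by move=> x; apply: NNPP => hx; apply: nex; exists x; apply/negP.
pose psi2 x := (psi x %/ p%:Z)%Z.
have e2 : forall x, psi x = psi2 x * p%:Z by move=> x; rewrite divzK.
apply: (IH psi2 y).
- by move=> x z; rewrite /psi2 hadd divzDl.
- by move=> x tx; rewrite /psi2 htor // div0z.
- by apply/eqP => h0; move: hy; rewrite e2 h0 mul0r eqxx.
- move: hN hy; rewrite e2 abszM absz_nat => hN hy.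
  have a0 : (0 < `|psi2 y|)%N by rewrite absz_gt0; apply/eqP => h0; move: hy; rewrite h0 mul0r eqxx.
  have := prime_gt1 pp; nia.
Qed.

Lemma prime_cop p (k : int) : prime p -> ~~ (p%:Z %| k)%Z -> coprimez p%:Z k.
Proof. by move=> pp; rewrite coprimezE dvdzE !absz_nat prime_coprime. Qed.

End Main.


Theorem proposition2p9 (M : zmodType) :
  fin_gen M -> centrally_endo_AIP M -> torsion_free M \/ semisimple M.
Proof.
move=> [n [g hg]] hAIP.
case: (classic (torsion_free M)) => [tf|ntf]; [by left|right].
move: (not_all_ex_not _ _ ntf) => [x hx1]; move: (not_all_ex_not _ _ hx1) => [k hk1].
move: (imply_to_and _ _ hk1) => [k0 hk2]; move: (imply_to_and _ _ hk2) => [hk hx].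
case: (exact_order (ex_intro _ k (conj k0 hk) : tors x)) => o [o0 hord].
have o1 : (1 < o)%N.
  rewrite ltn_neqAle eq_sym o0 andbT; apply/eqP => o_1; apply: hx.
  by rewrite -(mulr1z x); apply/hord; rewrite o_1; exact: dvd1z.
set p := pdiv o.
have pp : prime p by apply: pdiv_prime.
have po : (p %| o)%N by apply: pdiv_dvd.
set t := x *+ (o %/ p).
have tp : t *+ p = 0.
  rewrite /t -mulrnA divnK // pmulrn; apply/hord; exact: dvdzz.
have t0 : t != 0.
  apply/eqP; rewrite /t pmulrn => /hord; rewrite dvdzE !absz_nat => h.
  by move: (not_dvd_div o0 pp po); rewrite h.
have tpz : t *~ p%:Z = 0 by rewrite -pmulrn.
have alltors : forall y : M, tors y.
  move=> y; apply: NNPP => ny.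
  have hy : forall m, ~~ dq 0 m -> ~ tors (y *~ m).
    move=> m; rewrite /dq dvd0z => m0 [kk [kk0 hkk]]; apply: ny.
    case: m m0 hkk => a m0 hkk.
      exists (a * kk)%N; split; first by rewrite muln_gt0 kk0 andbT lt0n; move: m0; rewrite eqz_nat.
      by rewrite mulrnA [y *+ a]pmulrn.
    exists (a.+1 * kk)%N; split; first by rewrite muln_gt0 kk0.
    by rewrite mulrnA; move: hkk; rewrite NegzE mulrNz -pmulrn mulNrn => /eqP; rewrite oppr_eq0 => /eqP.
  have hqH : forall z : M, tors (z *~ (0%N)%:Z) by move=> z; exists 1%N; split => //; rewrite mulr1n -pmulrn mulr0n.
  case: (coords hg (tors_sub M) (or_introl erefl) hqH hy) => psi [hadd [htor [y' hy']]].
  have hadd' : forall x z, psi (x + z) = psi x + psi z.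
    by move=> x1 z1; apply/eqP; rewrite -subr_eq0 -dvd0z; apply: hadd.
  have htor' : forall x, tors x -> psi x = 0.
    by move=> x1 tx; apply/eqP; rewrite -dvd0z; apply: htor.
  have hy0 : psi y' != 0 by rewrite -dvd0z.
  case: (descent pp hadd' htor' hy0 (ltnSn _)) => psi' [ad' [tor' [y'' hy'']]].
  pose a z := t *~ psi' z.
  have ae : is_endo a by move=> x1 z1; rewrite /a ad' mulrzDr.
  have al : lann (@tors M) a by split => // x1 tx; rewrite /a tor' // mulr0z.
  case: (hAIP (@tors M) (tors_fi M) a al) => zz [[zze zzk] [[_ zzc] hz]].
  have : a y'' = 0.
    rewrite -hz -zzc //; apply: zzk; exists p; split; first exact: prime_gt0.
    by rewrite /a mulrzn tp mul0rz.
  move=> ha; apply: (negP t0); apply/eqP; apply: (kill_coprime tpz ha).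
  exact: prime_cop.
have [e [e0 he]] : exists e, (0 < e)%N /\ forall z : M, z *+ e = 0.
  have : forall i, exists m, (0 < m)%N /\ g i *+ m = 0 by move=> i; case: (alltors (g i)) => m hm; exists m.
  case/fchoice => ord hord'.
  exists (\prod_(i < n) ord i)%N; split.
    by rewrite prodn_gt0 // => i; case: (hord' i).
  move=> z; case: (hg z) => c ->; rewrite -sumrMnl big1 // => i _.
  rewrite mulrzn (bigD1 i) //= mulrnA; case: (hord' i) => _ ->; by rewrite mul0rn mul0rz.
have B1 : forall p (u : M), prime p -> u *+ (p * p) = 0 -> u *+ p = 0.
  move=> q u pq hu; apply: NNPP => hw; set w := u *+ q.
  have wq : w *+ q = 0 by rewrite /w -mulrnA.
  have [y0 hy0] : exists y0 : M, ~ exists v, y0 = v *+ q.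
    apply: NNPP => hn.
    have allp : forall z : M, exists v, z = v *+ q.
      by move=> z; apply: NNPP => hz; apply: hn; exists z.
    have allpk : forall kk (z : M), exists v, z = v *+ (q ^ kk).
      elim=> [|kk IH] z; first by exists z; rewrite expn0 mulr1n.
      case: (IH z) => v ->; case: (allp v) => v' ->; exists v'.
      by rewrite -mulrnA expnS.
    case: (pfactor_coprime pq e0) => e' cop he'.
    case: (allpk (logn q e) w) => v hv.
    have we : w *+ e' = 0 by rewrite hv -mulrnA mulnC -he'.
    apply: hw; apply: (kill_coprime (a := q%:Z) (b := e'%:Z)).
    - by rewrite -pmulrn.
    - by rewrite -pmulrn.
    - by rewrite coprimezE !absz_nat.
  pose pM (z : M) := exists v, z = v *+ q.
  have pMs : is_submodule pM.
    split; first by exists 0; rewrite mul0rn.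
    by move=> x1 z1 [v1 ->] [v2 ->]; exists (v1 - v2); rewrite mulrnBl.
  have hqH : forall z, pM (z *~ q%:Z) by move=> z; exists z; rewrite pmulrn.
  have hy : forall m, ~~ dq q m -> ~ pM (y0 *~ m).
    move=> m nm [v hv]; apply: hy0.
    case/coprimezP: (prime_cop pq nm) => [[a b]] /= hab.
    exists (y0 *~ a + v *~ b).
    rewrite -{1}(mulr1z y0) -hab mulrzDr [a * _]mulrC [b * _]mulrC !mulrzA hv.
    by rewrite mulrnDl !mulrzn pmulrn.
  case: (coords hg pMs (or_intror pq) hqH hy) => psi [hadd [hpm [y' hy']]].
  have wqz : w *~ q%:Z = 0 by rewrite -pmulrn.
  pose a z := w *~ psi z.
  have ae : is_endo a.
    move=> x1 z1; rewrite /a -mulrzDr; apply/eqP; rewrite -subr_eq0 -mulrzBr; apply/eqP.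
    exact: kill_dvd wqz (hadd x1 z1).
  have al : lann pM a by split => // x1 hxx1; rewrite /a; apply: kill_dvd wqz (hpm _ hxx1).
  have pfi : fully_invariant pM.
    by split => // f hf x1 [v ->]; exists (f v); rewrite endoMn.
  case: (hAIP _ pfi a al) => zz [[zze zzk] [[_ zzc] hz]].
  have : a y' = 0.
    rewrite -hz -zzc //; apply: zzk; exists (u *~ psi y').
    by rewrite /a /w mulrzn.
  move=> ha; apply: hw; apply: (kill_coprime wqz ha); exact: prime_cop.
move=> N hN.
case: (ext B1 hN (g := g) (fun i => alltors (g i)) (leqnn n)) => K [hK [hNK hcov]].
exists K; split => //; split => //.
move=> z; case: (hg z) => c ->.
apply: (subSum (N := fun z => exists a b, N a /\ K b /\ z = a + b)).
  exact: sum_sub.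
move=> i; exact: hcov.
Qed.
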